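(* Let $\delta>0$ be the rounding precision and let the representable numbers be the integer multiples of $\delta$. For $x\in\mathbb{R}$ let $\lfloor x\rfloor$ denote the greatest representable number $\le x$, and let stochastic rounding be the random variable $$\mathrm{fl}(x)=\begin{cases}\lfloor x\rfloor & \text{with probability } 1-\frac{x-\lfloor x\rfloor}{\delta},\\ \lfloor x\rfloor+\delta & \text{with probability } \frac{x-\lfloor x\rfloor}{\delta},\end{cases}$$ with all rounding operations performed independently. Then for real numbers $x_1,\dots,x_{N_s}$ and $\mathrm{op}\in\{+,-\}$, $$\mathrm{fl}(\mathrm{fl}(\cdots \mathrm{fl}(\mathrm{fl}(x_1)\,\mathrm{op}\,x_2)\,\mathrm{op}\,\cdots)\,\mathrm{op}\,x_{N_s})=\mathrm{fl}(x_1)\,\mathrm{op}\,\mathrm{fl}(x_2)\,\mathrm{op}\,\cdots\,\mathrm{op}\,\mathrm{fl}(x_{N_s}),$$ where the equality is understood as equality of the probability distributions of the two random variables.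
   Context: Stochastic rounding (SR) with rounding precision $\delta$ as defined in the claim. *)

(* Defs.v *)
From HB Require Import structures.
From mathcomp Require Import all_boot all_order all_algebra.
From mathcomp Require Import reals.
Set Implicit Arguments. Unset Strict Implicit. Unset Printing Implicit Defensive.
Import Order.TTheory GRing.Theory Num.Theory.
Local Open Scope ring_scope.

(* A finitely supported (discrete) distribution over R, given as a finite
   list of (probability, value) atoms. *)
Definition fdist (R : realType) := seq (R * R).

Definition prob_of (R : realType) (d : fdist R) (A : pred R) : R :=
  \sum_(pv <- d | A pv.2) pv.1.

Definition same_law (R : realType) (d e : fdist R) : Prop :=
  forall A : pred R, prob_of d A = prob_of e A.

Definition fbind (R : realType) (d : fdist R) (f : R -> fdist R) : fdist R :=
  flatten [seq [seq (pv.1 * qw.1, qw.2) | qw <- f pv.2] | pv <- d].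

Definition fcombine (R : realType) (op : R -> R -> R) (d e : fdist R) : fdist R :=
  fbind d (fun v => [seq (qw.1, op v qw.2) | qw <- e]).

Definition rfloor (R : realType) (delta x : R) : R :=
  delta * (Num.floor (x / delta))%:~R.

Definition SR (R : realType) (delta x : R) : fdist R :=
  let f := rfloor delta x in
  [:: (1 - (x - f) / delta, f); ((x - f) / delta, f + delta)].

(* fl(...fl(fl(x1) op x2) op ... op xN), each rounding independent. *)
Definition lhs_law (R : realType) (delta : R) (op : R -> R -> R)
  (x1 : R) (xs : seq R) : fdist R :=
  foldl (fun d x => fbind d (fun v => SR delta (op v x))) (SR delta x1) xs.

(* fl(x1) op fl(x2) op ... op fl(xN) (left-associated), independent roundings. *)
Definition rhs_law (R : realType) (delta : R) (op : R -> R -> R)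
  (x1 : R) (xs : seq R) : fdist R :=
  foldl (fun d x => fcombine op d (SR delta x)) (SR delta x1) xs.

(* Main.v *)
Require Import Defs.
From HB Require Import structures.
From mathcomp Require Import all_boot all_order all_algebra.
From mathcomp Require Import reals.
From mathcomp Require Import ring lra.
Import Order.TTheory GRing.Theory Num.Theory.
Local Open Scope ring_scope.

Section S.
Variable R : realType.

Definition E (d : fdist R) (g : R -> R) : R := \sum_(pv <- d) pv.1 * g pv.2.

Lemma E_fbind d f g : E (fbind d f) g = E d (fun v => E (f v) g).
Proof.
rewrite /E /fbind big_flatten /= big_map; apply: eq_bigr => pv _.
rewrite big_map mulr_sumr; apply: eq_bigr => qw _ /=; by rewrite mulrA.
Qed.

Lemma E_fcombine op d e g :
  E (fcombine op d e) g = E d (fun v => E e (fun w => g (op v w))).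
Proof.
rewrite /fcombine E_fbind; apply: eq_bigr => pv _; by rewrite /E big_map.
Qed.

Lemma E_SR delta z g :
  0 < delta ->
  E (SR delta z) g =
  (1 - (z / delta - (Num.floor (z / delta))%:~R)) * g (delta * (Num.floor (z / delta))%:~R)
  + (z / delta - (Num.floor (z / delta))%:~R) * g (delta * (Num.floor (z / delta))%:~R + delta).
Proof.
move=> hd; rewrite /E /SR /rfloor !big_cons big_nil addr0 /=.
have -> : (z - delta * (Num.floor (z / delta))%:~R) / delta
   = z / delta - (Num.floor (z / delta))%:~R by field; rewrite gt_eqF.
by [].
Qed.

Definition mult (delta v : R) := exists k : int, v = delta * k%:~R.

Lemma SR_mult delta z pv : pv \in SR delta z -> mult delta pv.2.
Proof.
rewrite !inE => /orP [] /eqP -> /=; rewrite /rfloor.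
  by exists (Num.floor (z / delta)).
exists (Num.floor (z / delta) + 1); by rewrite intrD mulrDr mulr1.
Qed.

Lemma key delta op v x g :
  0 < delta -> (op = +%R \/ op = (fun a b => a - b)) -> mult delta v ->
  E (SR delta (op v x)) g = E (SR delta x) (fun w => g (op v w)).
Proof.
move=> hd hop [k ->]; have hd0 : delta != 0 by rewrite gt_eqF.
rewrite !E_SR //.
set y := x / delta; set m := Num.floor y.
have [hm1 hm2] : m%:~R <= y /\ y < (m + 1)%:~R.
  by rewrite /m floor_le floorD1_gt.
rewrite intrD in hm2.
have hx : x = delta * y by rewrite /y; field.
case: hop => ->.
  have hz : (delta * k%:~R + x) / delta = k%:~R + y by rewrite hx; field.
  rewrite hz.
  have -> : Num.floor (k%:~R + y) = k + m.
    apply: floor_def; rewrite !intrD; apply/andP; split; lra.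
  rewrite !intrD; congr (_ * g _ + _ * g _); ring.
have hz : (delta * k%:~R - x) / delta = k%:~R - y by rewrite hx; field.
rewrite hz.
have [hym | hym] := eqVneq y m%:~R.
  have -> : Num.floor (k%:~R - y) = k - m.
    apply: floor_def; rewrite !intrD !intrN; apply/andP; split; lra.
  rewrite hym !intrD !intrN.
  have -> : k%:~R - m%:~R - (k%:~R + - m%:~R) = 0 :> R by ring.
  have -> : m%:~R - m%:~R = 0 :> R by ring.
  rewrite !mul0r !addr0; congr (_ * g _); ring.
have hlt : m%:~R < y by rewrite lt_neqAle eq_sym hym hm1.
have -> : Num.floor (k%:~R - y) = k - m - 1.
  apply: floor_def; rewrite !intrD !intrN; apply/andP; split; lra.
rewrite !intrD !intrN addrC; congr (_ * g _ + _ * g _); ring.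
Qed.

End S.
Arguments E {R}.
Arguments mult {R}.
Arguments SR_mult {R}.
Arguments key {R}.

Theorem proposition3p5 (R : realType) (delta : R) (op : R -> R -> R)
  (x1 : R) (xs : seq R) :
  0 < delta ->
  (op = +%R \/ op = (fun a b => a - b)) ->
  same_law (lhs_law delta op x1 xs) (rhs_law delta op x1 xs).
Proof.
move=> hd hop.
suff H : forall g, E (lhs_law delta op x1 xs) g = E (rhs_law delta op x1 xs) g.
  move=> A; rewrite /prob_of.
  rewrite big_mkcond [RHS]big_mkcond.
  have := H (fun v => (A v)%:R); rewrite /E => HH.
  transitivity (\sum_(pv <- lhs_law delta op x1 xs) pv.1 * (A pv.2)%:R).
    by apply: eq_bigr => pv _; case: (A pv.2); rewrite ?mulr1 ?mulr0.
  rewrite HH; by apply: eq_bigr => pv _; case: (A pv.2); rewrite ?mulr1 ?mulr0.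
rewrite /lhs_law /rhs_law.
have gen : forall (ys : seq R) (d1 d2 : fdist R),
  (forall pv, pv \in d1 -> mult delta pv.2) ->
  (forall g, E d1 g = E d2 g) ->
  forall g, E (foldl (fun d x => fbind d (fun v => SR delta (op v x))) d1 ys) g
          = E (foldl (fun d x => fcombine op d (SR delta x)) d2 ys) g.
  elim=> [|x ys IH] d1 d2 hm heq g /=; first exact: heq.
  apply: IH.
  - move=> pv /flattenP [s /mapP [u _ ->] hin].
    move: hin => /mapP [qw hq ->] /=; exact: SR_mult hq.
  - move=> h; rewrite E_fbind E_fcombine -heq; apply: eq_big_seq => pv hpv.
    by congr (_ * _); apply: key => //; exact: hm.
apply: gen => //; move=> pv; exact: SR_mult.
Qed.
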